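(* Let $n \ge 1$ and let $\vec x_{1,\text{pred}},\dots,\vec x_{n,\text{pred}} \in \mathbb{R}^3$ and $\vec x_{1,\text{gt}},\dots,\vec x_{n,\text{gt}} \in \mathbb{R}^3$ be two ordered families of points (predicted and ground-truth atom positions). Define $$\text{PM}_{\text{atom}}^2 = \frac{1}{n^2}\sum_{i=1}^{n}\sum_{j=1}^{n}\Big(\lVert \vec x_{i,\text{pred}}-\vec x_{j,\text{pred}}\rVert - \lVert \vec x_{i,\text{gt}}-\vec x_{j,\text{gt}}\rVert\Big)^2,\qquad \text{RMSD}_{\text{atom}}^2 = \frac{1}{n}\sum_{i=1}^{n}\lVert \vec x_{i,\text{pred}}-\vec x_{i,\text{gt}}\rVert^2,$$ where $\lVert\cdot\rVert$ is the Euclidean norm. Then $\text{PM}_{\text{atom}}^2 \le 2\,\text{RMSD}_{\text{atom}}^2$. *)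

(* Defs.v *)
From mathcomp Require Import all_boot all_order all_algebra.
From mathcomp Require Import reals.
Set Implicit Arguments. Unset Strict Implicit. Unset Printing Implicit Defensive.
Import Order.TTheory GRing.Theory Num.Theory.
Local Open Scope ring_scope.

Definition enorm (R : realType) (v : 'rV[R]_3) : R :=
  Num.sqrt (\sum_(k < 3) v 0 k ^+ 2).

Definition PM_atom_sq (R : realType) (n : nat) (xp xg : 'I_n -> 'rV[R]_3) : R :=
  (n%:R ^+ 2)^-1 *
  \sum_(i < n) \sum_(j < n)
     (enorm (xp i - xp j) - enorm (xg i - xg j)) ^+ 2.

Definition RMSD_atom_sq (R : realType) (n : nat) (xp xg : 'I_n -> 'rV[R]_3) : R :=
  (n%:R)^-1 * \sum_(i < n) enorm (xp i - xg i) ^+ 2.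

(* Main.v *)
Require Import Defs.
From mathcomp Require Import all_boot all_order all_algebra.
From mathcomp Require Import reals.
From mathcomp Require Import ring lra.
Import Order.TTheory GRing.Theory Num.Theory.
Local Open Scope ring_scope.

Lemma sq_enorm (R : realType) (v : 'rV[R]_3) :
  enorm v ^+ 2 = \sum_(k < 3) v 0 k ^+ 2.
Proof. by rewrite /enorm sqr_sqrtr // sumr_ge0 // => k _; rewrite sqr_ge0. Qed.

Lemma enorm_ge0 (R : realType) (v : 'rV[R]_3) : 0 <= enorm v.
Proof. exact: sqrtr_ge0. Qed.

Lemma dot_le (R : realType) (u v : 'rV[R]_3) :
  \sum_(k < 3) u 0 k * v 0 k <= enorm u * enorm v.
Proof.
have [hn|hp] := lerP (\sum_(k < 3) u 0 k * v 0 k) 0.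
  by apply: le_trans hn _; rewrite mulr_ge0 // enorm_ge0.
rewrite /enorm -sqrtrM; last by rewrite sumr_ge0 // => k _; rewrite sqr_ge0.
have -> : \sum_(k < 3) u 0 k * v 0 k = Num.sqrt ((\sum_(k < 3) u 0 k * v 0 k) ^+ 2).
  by rewrite sqrtr_sqr ger0_norm // ltW.
apply: ler_wsqrtr.
rewrite !big_ord_recl !big_ord0 !addr0.
set a := u 0 _; set b := u 0 _; set c := u 0 _.
set d := v 0 _; set e := v 0 _; set f := v 0 _.
have h : (a^+2 + (b^+2 + c^+2)) * (d^+2 + (e^+2 + f^+2)) - (a*d + (b*e + c*f))^+2
   = (a*e - b*d)^+2 + (a*f - c*d)^+2 + (b*f - c*e)^+2 by ring.
rewrite -subr_ge0 h.
by rewrite !addr_ge0 // sqr_ge0.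
Qed.

Lemma key (R : realType) (a b : 'rV[R]_3) :
  (enorm a - enorm b) ^+ 2 <= enorm (a - b) ^+ 2.
Proof.
have hd := dot_le _ a b.
have ha := sq_enorm _ a; have hb := sq_enorm _ b.
rewrite sq_enorm.
have -> : \sum_(k < 3) (a - b) 0 k ^+ 2 =
  \sum_(k < 3) a 0 k ^+ 2 + \sum_(k < 3) b 0 k ^+ 2
  - 2 * \sum_(k < 3) a 0 k * b 0 k.
  rewrite !big_ord_recl !big_ord0 !mxE; ring.
rewrite -ha -hb sqrrB.
lra.
Qed.

Lemma pair_sum (R : realType) (n : nat) (x : 'I_n -> R) :
  \sum_(i < n) \sum_(j < n) (x i - x j) ^+ 2 =
  2 * n%:R * \sum_(i < n) x i ^+ 2 - 2 * (\sum_(i < n) x i) ^+ 2.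
Proof.
transitivity (\sum_(i < n) \sum_(j < n) (x i ^+ 2 + x j ^+ 2 - 2 * (x i * x j))).
  by apply: eq_bigr => i _; apply: eq_bigr => j _; ring.
rewrite (eq_bigr (fun i => n%:R * x i ^+ 2 + \sum_(j < n) x j ^+ 2
                            - 2 * (x i * \sum_(j < n) x j))); last first.
  move=> i _; rewrite sumrB big_split /= sumr_const card_ord.
  by rewrite -[_ *+ n]mulr_natl !mulr_sumr.
rewrite sumrB big_split /= sumr_const card_ord -[_ *+ n]mulr_natl.
rewrite -mulr_sumr -mulr_sumr -mulr_suml.
ring.
Qed.

Theorem theorem1 (R : realType) (n : nat) (hn : (1 <= n)%N)
  (xp xg : 'I_n -> 'rV[R]_3) :
  PM_atom_sq xp xg <= 2 * RMSD_atom_sq xp xg.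
Proof.
set d := fun i => xp i - xg i.
have S1 : \sum_(i < n) \sum_(j < n)
     (enorm (xp i - xp j) - enorm (xg i - xg j)) ^+ 2 <=
   \sum_(i < n) \sum_(j < n) \sum_(k < 3) (d i 0 k - d j 0 k) ^+ 2.
  apply: ler_sum => i _; apply: ler_sum => j _.
  apply: le_trans (key _ _ _) _; rewrite sq_enorm le_eqVlt; apply/orP; left.
  apply/eqP; apply: eq_bigr => k _; rewrite /d !mxE; congr (_ ^+ 2); ring.
have S2 : \sum_(i < n) \sum_(j < n) \sum_(k < 3) (d i 0 k - d j 0 k) ^+ 2 <=
   2 * n%:R * \sum_(i < n) enorm (d i) ^+ 2.
  have -> : \sum_(i < n) \sum_(j < n) \sum_(k < 3) (d i 0 k - d j 0 k) ^+ 2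
     = \sum_(k < 3) \sum_(i < n) \sum_(j < n) (d i 0 k - d j 0 k) ^+ 2.
    under eq_bigr do rewrite exchange_big /=.
    by rewrite exchange_big.
  rewrite (eq_bigr (fun i => \sum_(k < 3) d i 0 k ^+ 2)); last first.
    by move=> i _; rewrite sq_enorm.
  rewrite [in X in _ <= X]exchange_big /= mulr_sumr; apply: ler_sum => k _.
  rewrite (pair_sum _ _ (fun i => d i 0 k)) lerBlDr lerDl mulr_ge0 // sqr_ge0 //.
rewrite /PM_atom_sq /RMSD_atom_sq.
have n0 : 0 < n%:R :> R by rewrite ltr0n.
apply: le_trans (ler_wpM2l _ (le_trans S1 S2)) _.
  by rewrite invr_ge0 exprn_ge0 // ltW.
rewrite le_eqVlt; apply/orP; left; apply/eqP.
rewrite /d; field; by rewrite gt_eqF.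
Qed.
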